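(* Forgetting the rack structure on the domain defines a one-to-one correspondence between crossed modules of racks and generalized augmented racks. Explicitly: if $\mu:X\to R$ is a crossed module of racks, then $(R,X,\mu)$, with $X$ regarded merely as an $R$-set, is a generalized augmented rack; conversely, if $(R,X,p)$ is a generalized augmented rack, then $X$ with the operation $x\lhd y:=x\cdot p(y)$ is a rack and $p:X\to R$, together with the given action of $R$ on $X$, is a crossed module of racks; and these two constructions are mutually inverse.
   Context: A (right) rack is a set $X$ with a binary operation $(x,y)\mapsto x\lhd y$ such that each map $x\mapsto x\lhd y$ is a bijection of $X$ and $(x\lhd y)\lhd z=(x\lhd z)\lhd(y\lhd z)$ for all $x,y,z\in X$. A morphism of racks is a map $\mu$ with $\mu(r\lhd r')=\mu(r)\lhd\mu(r')$. If $R$ is a rack and $X$ a set, an action of $R$ on $X$ (making $X$ an $R$-set, or $R$-module) is a family of bijections $x\mapsto x\cdot r$ of $X$, one for each $r\in R$, such that $(x\cdot r)\cdot r'=(x\cdot r')\cdot(r\lhd r')$ for all $x\in X$, $r,r'\in R$. If $X$ is itself a rack, the action is by automorphisms if moreover $(x\lhd x')\cdot r=(x\cdot r)\lhd(x'\cdot r)$. A crossed module of racks is a morphism of racks $\mu:R\to S$ together with an action of $S$ on $R$ by automorphisms such that (1) $\mu(r\cdot s)=\mu(r)\lhd s$ for all $r\in R$, $s\in S$, and (2) (Peiffer identity) $r\cdot\mu(r')=r\lhd r'$ for all $r,r'\in R$. A generalized augmented rack is a triple $(R,X,p)$ where $R$ is a rack, $X$ is an $R$-set, and $p:X\to R$ is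 a map with $p(x\cdot r)=p(x)\lhd r$ for all $x\in X$, $r\in R$. *)

(* Defs.v *)
From mathcomp Require Import ssreflect ssrfun ssrbool.

Set Implicit Arguments.
Unset Strict Implicit.

Definition is_rack (X : Type) (op : X -> X -> X) : Prop :=
  (forall y : X, bijective (fun x => op x y)) /\
  (forall x y z : X, op (op x y) z = op (op x z) (op y z)).

Definition is_rack_morphism (X Y : Type) (opX : X -> X -> X) (opY : Y -> Y -> Y)
  (f : X -> Y) : Prop :=
  forall x x' : X, f (opX x x') = opY (f x) (f x').

Definition is_rack_action (R X : Type) (opR : R -> R -> R) (act : X -> R -> X)
  : Prop :=
  (forall r : R, bijective (fun x => act x r)) /\
  (forall (x : X) (r r' : R), act (act x r) r' = act (act x r') (opR r r')).

Definition acts_by_automorphisms (R X : Type) (opX : X -> X -> X)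
  (act : X -> R -> X) : Prop :=
  forall (x x' : X) (r : R), act (opX x x') r = opX (act x r) (act x' r).

Definition is_crossed_module (R S : Type) (opR : R -> R -> R) (opS : S -> S -> S)
  (mu : R -> S) (act : R -> S -> R) : Prop :=
  [/\ is_rack opR /\ is_rack opS, is_rack_morphism opR opS mu,
      is_rack_action opS act /\ acts_by_automorphisms opR act,
      (forall (r : R) (s : S), mu (act r s) = opS (mu r) s)
    & (forall r r' : R, act r (mu r') = opR r r')].

Definition is_gen_aug_rack (R X : Type) (opR : R -> R -> R) (act : X -> R -> X)
  (p : X -> R) : Prop :=
  [/\ is_rack opR, is_rack_action opR act
    & (forall (x : X) (r : R), p (act x r) = opR (p x) r)].

Definition induced_op (R X : Type) (act : X -> R -> X) (p : X -> R) : X -> X -> X :=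
  fun x y => act x (p y).

(* Main.v *)
Require Import Defs.
From mathcomp Require Import ssreflect ssrfun ssrbool.
From Stdlib Require Import FunctionalExtensionality.

(* For fixed carriers R, X, rack operation opR on R, action act of R on X and
   map p : X -> R:
   (1) forgetting the rack structure opX of a crossed module gives a
       generalized augmented rack;
   (2) a generalized augmented rack yields a crossed module with
       x <| y := x . p(y);
   (3) mutual inverseness: the rack structure of any crossed module is the
       induced one (the other composite is the identity on (R,X,act,p)
       by construction, since no data is changed). *)
Theorem mainTheorem1 (R X : Type) (opR : R -> R -> R) (act : X -> R -> X)
  (p : X -> R) :
  [/\ (forall opX : X -> X -> X,
         is_crossed_module opX opR p act -> is_gen_aug_rack opR act p),
      (is_gen_aug_rack opR act p ->
         is_crossed_module (induced_op act p) opR p act)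
    & (forall opX : X -> X -> X,
         is_crossed_module opX opR p act -> opX = induced_op act p)].
Proof.
split.
- move=> opX [[_ HR] _ HA HC _]; split => //; by case: HA.
- move=> [HR [Hb Hc] Hp]; split.
  + split => //; split.
    * by move=> y; apply: Hb.
    * move=> x y z; rewrite /induced_op Hc Hp; done.
  + by move=> x x'; rewrite /induced_op Hp.
  + split; first by split.
    by move=> x x' r; rewrite /induced_op Hc Hp.
  + by [].
  + by [].
- move=> opX [_ _ _ _ HP].
  apply: functional_extensionality => x; apply: functional_extensionality => y.
  by rewrite /induced_op HP.
Qed.
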